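(* Let $\mathcal I$ be a canonical instance with groups $G_1,\dots,G_k$, group weights $w_1>\cdots>w_k$, sizes $n_1,\dots,n_k$, $W_q=n_qw_q$, $L_1=0$ and $L_r=\sum_{q<r}W_q/w_r$ for $r\ge2$. Fix $i\in[k]$ and define the proxy cost $v^\star_i$ on items by $v^\star_i(e_h)=w_i$ if $h\le L_i+n_i$; $v^\star_i(e_h)=w_s$ if $L_i+n_i+\cdots+n_{s-1}<h\le L_i+n_i+\cdots+n_s$ for $s=i+1,\dots,k$; and $v^\star_i(e_h)=0$ if $h>L_i+n_i+\cdots+n_k$; extend additively. Let $a$ be any agent of group $G_i$ with cost function $v$, and let $d$ be the largest index $h$ with $v(e_h)>w_i$ (with $d=0$ if there is none). Then for every integer $t$ with $d<t\le m$, $$\sum_{h=d+1}^{t}v(e_h)\le\sum_{h=d+1}^{t}v^\star_i(e_h).$$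
   Context: Chore-allocation instance: agents, a finite set $\mathcal M=\{e_1,\dots,e_m\}$ of indivisible items, positive weights, additive cost functions $v:2^{\mathcal M}\to\mathbb R_{\ge0}$. The weighted maximin share of agent $a$ with weight $w_a$ and cost $v_a$ is $\mathsf{WMMS}_a=w_a\min_{\text{allocations }(B_b)_b}\max_{b}\frac{v_a(B_b)}{w_b}$, allocations being ordered partitions of $\mathcal M$ into one (possibly empty) bundle per agent. An instance is canonical if: (i) $\max$ weight is $w_1$, weights sum to $1$, and every weight equals $w_1/2^p$ for some nonnegative integer $p$; (ii) every agent's total cost $v(\mathcal M)=1$, and every single-item cost is either $0$ or $w_1/2^p$ for some nonnegative integer $p$; (iii) every agent has $v(e_1)\ge\cdots\ge v(e_m)$; (iv) every agent's $\mathsf{WMMS}$ equals her weight. Agents are partitioned into groups $G_1,\dots,G_k$ by weight, all agents of $G_i$ having weight $w_i$, with $w_1>\cdots>w_k$, and $n_i=|G_i|$. *)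

(* Defs.v *)
From HB Require Import structures.
From mathcomp Require Import all_boot all_order all_algebra.
Set Implicit Arguments. Unset Strict Implicit. Unset Printing Implicit Defensive.
Import Order.TTheory GRing.Theory Num.Theory.
Local Open Scope ring_scope.

Section Defs.
Variable R : realFieldType.
Variables n m k : nat.
(* Agents are 'I_n, items e_1,...,e_m are 'I_m (item e_h is the ordinal h-1).
   Costs are additive: v a e is the cost of item e for agent a, and the
   cost of a bundle is the sum of its items' costs. *)

(* An allocation is a function item -> agent, i.e. an ordered partition of
   the items into one (possibly empty) bundle per agent. *)
Definition allocation := {ffun 'I_m -> 'I_n}.

Definition bundle_cost (va : 'I_m -> R) (A : allocation) (b : 'I_n) : R :=
  \sum_(e | A e == b) va e.

(* max_b v_a(B_b)/w_b  (costs and weights are nonnegative, so 0 is a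
   harmless identity element of max) *)
Definition alloc_value (w : 'I_n -> R) (va : 'I_m -> R) (A : allocation) : R :=
  \big[Num.max/0]_(b : 'I_n) (bundle_cost va A b / w b).

(* min over all allocations (the set of allocations is finite; it is
   nonempty as soon as there is an agent). *)
Definition mms_value (w : 'I_n -> R) (va : 'I_m -> R) : R :=
  match enum {: allocation} with
  | [::] => 0
  | A0 :: _ => \big[Num.min/alloc_value w va A0]_(A : allocation) alloc_value w va A
  end.

Definition WMMS (w : 'I_n -> R) (va : 'I_m -> R) (a : 'I_n) : R :=
  w a * mms_value w va.

Definition wmax (w : 'I_n -> R) : R := \big[Num.max/0]_(a : 'I_n) w a.

(* Instance data: group weights gw : 'I_k -> R (group G_{s+1} is indexed by
   the ordinal s), group assignment g, item costs v.  The weight of agent a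
   is gw (g a). *)
Record canonical_instance (gw : 'I_k -> R) (g : 'I_n -> 'I_k)
    (v : 'I_n -> 'I_m -> R) : Prop := {
  ci_gw_decr : forall s t : 'I_k, (s < t)%N -> gw t < gw s;
  ci_groups_nonempty : forall s : 'I_k, exists a, g a = s;
  ci_w_pos : forall a, 0 < gw (g a);
  ci_v_nonneg : forall a e, 0 <= v a e;
  ci_w_sum : \sum_(a : 'I_n) gw (g a) = 1;
  ci_w_pow2 : forall a, exists p : nat,
      gw (g a) = wmax (fun b => gw (g b)) / 2 ^+ p;
  ci_v_total : forall a, \sum_(e : 'I_m) v a e = 1;
  ci_v_pow2 : forall a e, v a e = 0 \/
      exists p : nat, v a e = wmax (fun b => gw (g b)) / 2 ^+ p;
  ci_v_sorted : forall a (e f : 'I_m), (e <= f)%N -> v a f <= v a e;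
  ci_wmms : forall a, WMMS (fun b => gw (g b)) (v a) a = gw (g a)
}.

Definition group_size (g : 'I_n -> 'I_k) (q : 'I_k) : nat := #|[set b | g b == q]|.

Definition Wgrp (gw : 'I_k -> R) (g : 'I_n -> 'I_k) (q : 'I_k) : R :=
  (group_size g q)%:R * gw q.

Definition Lgrp (gw : 'I_k -> R) (g : 'I_n -> 'I_k) (r : 'I_k) : R :=
  (\sum_(q : 'I_k | (q < r)%N) Wgrp gw g q) / gw r.

Definition cumul_le gw g (i s : 'I_k) : R :=
  Lgrp gw g i + (\sum_(q : 'I_k | (i <= q <= s)%N) group_size g q)%:R.
Definition cumul_lt gw g (i s : 'I_k) : R :=
  Lgrp gw g i + (\sum_(q : 'I_k | (i <= q < s)%N) group_size g q)%:R.

(* proxy cost v*_i(e_h), h 1-based *)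
Definition vstar gw g (i : 'I_k) (h : nat) : R :=
  if h%:R <= cumul_le gw g i i then gw i
  else match [pick s : 'I_k | (i < s)%N && (cumul_lt gw g i s < h%:R)
                               && (h%:R <= cumul_le gw g i s)] with
       | Some s => gw s
       | None => 0
       end.

Definition dindex (va : 'I_m -> R) (wi : R) : nat :=
  \max_(j : 'I_m | wi < va j) j.+1.

End Defs.

(* Main.v *)
Require Import Defs.
From HB Require Import structures.
From mathcomp Require Import all_boot all_order all_algebra.
From mathcomp Require Import zify lra ring.
Import Order.TTheory GRing.Theory Num.Theory.
Local Open Scope ring_scope.

Lemma sum_ord_nat (R : realFieldType) (m d t : nat) (G : nat -> R) :
  (t <= m)%N ->
  \sum_(j : 'I_m | (d <= j < t)%N) G j = \sum_(d <= j < t) G j.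
Proof.
move=> htm; rewrite -(big_mkord (fun j => (d <= j < t)%N) G).
rewrite [RHS](big_nat_widenl _ 0) // [RHS](big_nat_widen _ _ m) //.
Qed.

Lemma sum_sub (R : realFieldType) (I : finType) (P Q : pred I) (F : I -> R) :
  (forall i, 0 <= F i) -> (forall i, P i -> Q i) ->
  \sum_(i | P i) F i <= \sum_(i | Q i) F i.
Proof.
move=> F0 PQ; rewrite [X in _ <= X](bigID P) /=.
have -> : \sum_(i | Q i && P i) F i = \sum_(i | P i) F i.
  apply: eq_bigl => i.
  by case: (boolP (P i)) => [/PQ ->|]; rewrite ?andbF.
by rewrite lerDl sumr_ge0.
Qed.

Section Main.
Variable R : realFieldType.
Variables n m k : nat.
Variable gw : 'I_k -> R.
Variable g : 'I_n -> 'I_k.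
Variable v : 'I_n -> 'I_m -> R.
Hypothesis H : canonical_instance gw g v.

Lemma gw_pos s : 0 < gw s.
Proof. by have [b <-] := ci_groups_nonempty H s; apply: ci_w_pos H b. Qed.

Lemma gw_le (s t : 'I_k) : (s <= t)%N -> gw t <= gw s.
Proof.
rewrite leq_eqVlt => /orP[/eqP e|lt]; last by apply/ltW/(ci_gw_decr H).
by have -> : s = t by apply: val_inj.
Qed.

Definition Wlt (s : nat) := \sum_(q : 'I_k | (q < s)%N) Wgrp gw g q.

Lemma sumW s : \sum_(b | (g b < s)%N) gw (g b) = Wlt s.
Proof.
rewrite (partition_big g (fun q : 'I_k => (q < s)%N)) //=.
apply: eq_bigr => q hq.
rewrite (eq_big (fun b => b \in [set b | g b == q]) (fun _ => gw q)).
- by rewrite sumr_const /Wgrp /group_size mulr_natl.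
- by move=> b; rewrite inE; case: eqP => [->|]; rewrite ?hq ?andbF.
- by move=> b /andP[_ /eqP ->].
Qed.

Lemma Wlt_step s (hs : (s < k)%N) : Wlt s.+1 = Wlt s + Wgrp gw g (Ordinal hs).
Proof.
rewrite /Wlt (bigD1 (Ordinal hs)) //= addrC; congr (_ + _).
by apply: eq_bigl => q; rewrite -val_eqE /=; lia.
Qed.

Lemma Wlt_k : Wlt k = 1.
Proof.
rewrite -sumW -(ci_w_sum H); apply: eq_bigl => b; exact: ltn_ord.
Qed.

Lemma ratio_pow2 (q s : 'I_k) : (q < s)%N -> exists e : nat, gw q / gw s = (2 ^ e)%:R.
Proof.
move=> hqs.
have [bq hbq] := ci_groups_nonempty H q.
have [bs hbs] := ci_groups_nonempty H s.
have [pq hpq] := ci_w_pow2 H bq.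
have [ps hps] := ci_w_pow2 H bs.
rewrite hbq in hpq; rewrite hbs in hps.
set W := wmax _ in hpq hps.
have h2 : forall p : nat, (0 : R) < 2 ^+ p by move=> p; apply: exprn_gt0.
have hW : 0 < W.
  have := gw_pos q; rewrite hpq => h.
  have -> : W = (W / 2 ^+ pq) * 2 ^+ pq by rewrite divfK // gt_eqF.
  by rewrite mulr_gt0.
have hlt := ci_gw_decr H hqs.
case: (leqP pq ps) => hp.
  exists (ps - pq)%N; rewrite hpq hps natrX.
  have -> : ps = (pq + (ps - pq))%N by rewrite subnKC.
  rewrite addKn exprD.
  have e1 := h2 pq; have e2 := h2 (ps - pq)%N.
  field. by rewrite !gt_eqF.
exfalso; move: hlt; rewrite hpq hps.
have -> : pq = (ps + (pq - ps))%N by rewrite subnKC // ltnW.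
rewrite exprD.
set x := 2 ^+ ps; set y := 2 ^+ (pq - ps)%N.
have hx : 0 < x by apply: h2.
have hy : 1 <= y by apply: exprn_ege1; lra.
have hy0 : 0 < y by lra.
have -> : W / (x * y) = (W / x) / y by rewrite invfM mulrA.
move=> h.
have : W / x / y <= W / x.
  rewrite ler_pdivrMr //; apply: ler_peMr => //; exact/ltW/divr_gt0.
by move=> h'; have := lt_le_trans h h'; rewrite ltxx.
Qed.

Lemma Lgrp_nat (i : 'I_k) : exists N : nat, Lgrp gw g i = N%:R.
Proof.
rewrite /Lgrp mulr_suml.
apply: (big_ind (fun x => exists N : nat, x = N%:R)).
- by exists 0%N.
- by move=> x y [N1 ->] [N2 ->]; exists (N1 + N2)%N; rewrite natrD.
- move=> q hq; have [e he] := ratio_pow2 q i hq.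
  exists (group_size g q * 2 ^ e)%N.
  by rewrite /Wgrp -mulrA he natrM.
Qed.


Variable a : 'I_n.
Definition vn (j : nat) : R := oapp (v a) 0 (insub j : option 'I_m).

Lemma vn_ord (j : 'I_m) : vn j = v a j.
Proof. by rewrite /vn valK. Qed.

Lemma vn_ge0 j : 0 <= vn j.
Proof. by rewrite /vn; case: (insub j) => //= o; apply: (ci_v_nonneg H). Qed.

Lemma vn_mono j j' : (j <= j')%N -> vn j' <= vn j.
Proof.
move=> hjj'; case: (ltnP j' m) => hj'; last first.
  by rewrite {1}/vn insubF ?vn_ge0 //= ltnNge hj'.
have hj : (j < m)%N by lia.
have -> : vn j' = v a (Ordinal hj') by rewrite -vn_ord.
have -> : vn j = v a (Ordinal hj) by rewrite -vn_ord.
exact: (ci_v_sorted H).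
Qed.

Lemma vn_sum : \sum_(0 <= j < m) vn j = 1.
Proof.
rewrite big_mkord -(ci_v_total H a); apply: eq_bigr => j _; exact: vn_ord.
Qed.

Lemma alloc_exists : exists A : allocation n m, forall b, bundle_cost (v a) A b <= gw (g b).
Proof.
have hw := ci_wmms H a; rewrite /WMMS in hw.
have h1 : mms_value (fun b => gw (g b)) (v a) = 1.
  apply: (mulfI (x := gw (g a))); first by rewrite gt_eqF // (ci_w_pos H).
  by rewrite hw mulr1.
move: h1; rewrite /mms_value; case E: (enum _) => [|A0 s].
  by move=> /esym/eqP; rewrite oner_eq0.
move=> hmin.
case: (boolP [exists A : allocation n m, alloc_value (fun b => gw (g b)) (v a) A <= 1]).
  move/existsP=> [A hA]; exists A => b.
  have := le_trans (le_bigmax 0 (fun b => bundle_cost (v a) A b / gw (g b)) b) hA.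
  by rewrite ler_pdivrMr ?mul1r // (ci_w_pos H).
move/existsPn => hall; exfalso.
have : 1 < \big[Num.min/alloc_value (fun b => gw (g b)) (v a) A0]_(A : allocation n m)
              alloc_value (fun b => gw (g b)) (v a) A.
  apply: (big_ind (fun x => 1 < x)).
  - by rewrite ltNge hall.
  - by move=> x y hx hy; rewrite lt_min hx hy.
  - by move=> A _; rewrite ltNge hall.
by rewrite hmin ltxx.
Qed.

Variable A : allocation n m.
Hypothesis hA : forall b, bundle_cost (v a) A b <= gw (g b).

Lemma item_le_bundle (j : 'I_m) : v a j <= bundle_cost (v a) A (A j).
Proof.
rewrite /bundle_cost (bigD1 j) //= lerDl sumr_ge0 // => e _; exact: (ci_v_nonneg H).
Qed.

Lemma capacity s t : (s <= k)%N -> (t <= m)%N ->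
  (forall j, (j < t)%N -> forall b, (s <= g b)%N -> gw (g b) < vn j) ->
  \sum_(0 <= j < t) vn j <= Wlt s.
Proof.
move=> hsk htm hyp.
rewrite -(@sum_ord_nat R m 0 t vn htm).
rewrite (eq_bigr (fun j : 'I_m => v a j)); last by move=> j _; exact: vn_ord.
rewrite (partition_big (fun j => A j) predT) //=.
rewrite -sumW (big_mkcond (fun b => (g b < s)%N)) /=.
apply: ler_sum => b _; case: ifP => hb.
  apply: le_trans (hA b); apply: sum_sub => [j|j /andP[_ ->]] //.
  exact: (ci_v_nonneg H).
rewrite big1 // => j /andP[hjt /eqP hAj]; exfalso.
have hsb : (s <= g b)%N by rewrite leqNgt hb.
have := hyp j hjt b hsb; rewrite vn_ord => h2.
have := le_trans (item_le_bundle j) (hA (A j)); rewrite hAj => h3.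
by have := lt_le_trans h2 h3; rewrite ltxx.
Qed.

Variable i : 'I_k.
Variable N : nat.
Hypothesis hN : Lgrp gw g i = N%:R.

Definition Cnat (q : nat) : nat :=
  (N + \sum_(q' : 'I_k | (i <= q' <= q)%N) group_size g q')%N.

Lemma cle (s : 'I_k) : cumul_le gw g i s = (Cnat s)%:R.
Proof. by rewrite /cumul_le hN natrD. Qed.

Lemma clt (s : 'I_k) : (i < s)%N -> cumul_lt gw g i s = (Cnat s.-1)%:R.
Proof.
move=> his; rewrite /cumul_lt hN natrD /Cnat; congr (_ + (_)%:R).
by apply: eq_bigl => q /=; lia.
Qed.

Lemma Cnat_mono q1 q2 : (q1 <= q2)%N -> (Cnat q1 <= Cnat q2)%N.
Proof.
move=> hq; rewrite /Cnat leq_add2l.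
rewrite [X in (X <= _)%N]big_mkcond [X in (_ <= X)%N]big_mkcond.
apply: leq_sum => q _ /=.
case: ifP => h1; case: ifP => h2 //; lia.
Qed.

Lemma Cnat_i : Cnat i = (N + group_size g i)%N.
Proof.
rewrite /Cnat (eq_bigl (fun q => q == i)) ?big_pred1_eq //.
by move=> q /=; rewrite -val_eqE /=; lia.
Qed.

Lemma Cnat_step s (hs : (s.+1 < k)%N) : (i <= s)%N ->
  Cnat s.+1 = (Cnat s + group_size g (Ordinal hs))%N.
Proof.
move=> his; rewrite /Cnat (bigD1 (Ordinal hs)) /=; last by lia.
rewrite -addnA; congr (_ + _)%N; rewrite addnC; congr (_ + _)%N.
by apply: eq_bigl => q /=; rewrite -val_eqE /=; lia.
Qed.

Lemma gw_i_pos_gt (s : 'I_k) : (i < s)%N -> gw s < gw i.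
Proof. exact: (ci_gw_decr H). Qed.

Lemma vstar_le h : vstar gw g i h <= gw i.
Proof.
rewrite /vstar; case: ifP => // _; case: pickP => [s /andP[/andP[his _] _]|_].
  exact/ltW/(ci_gw_decr H).
exact/ltW/gw_pos.
Qed.

Lemma vstar_ge0 h : 0 <= vstar gw g i h.
Proof.
rewrite /vstar; case: ifP => _; first exact/ltW/gw_pos.
by case: pickP => [s _|_] //; exact/ltW/gw_pos.
Qed.

Lemma exist_block h s : (s < k)%N -> (i <= s)%N -> (Cnat i < h)%N -> (h <= Cnat s)%N ->
  exists s0 : 'I_k, [/\ (i < s0)%N, (Cnat s0.-1 < h)%N & (h <= Cnat s0)%N].
Proof.
elim: s => [|s IH] hsk his hi hs.
  have e : nat_of_ord i = 0%N by lia.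
  by move: hi; rewrite e; lia.
case: (leqP h (Cnat s)) => hh.
  case: (leqP i s) => his'; first by apply: IH => //; lia.
  have e : nat_of_ord i = s.+1 by lia.
  by move: hi; rewrite e; lia.
exists (Ordinal hsk); split => //=.
case: (leqP i s) => his'; first by lia.
have e : nat_of_ord i = s.+1 by lia.
by move: hi; rewrite e; lia.
Qed.

Lemma Lb (s : 'I_k) h : (i <= s)%N -> (h <= Cnat s)%N -> gw s <= vstar gw g i h.
Proof.
move=> his hs; rewrite /vstar cle ler_nat; case: ifP => hhi.
  exact: gw_le.
case: pickP => [s'' /andP[/andP[his'' hlt] hle] | hnone].
  rewrite clt // ltr_nat in hlt; rewrite cle ler_nat in hle.
  apply: gw_le; rewrite leqNgt; apply/negP => hss.
  have := @Cnat_mono s s''.-1 (ltac:(lia)); lia.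
exfalso.
have hi : (Cnat i < h)%N by rewrite ltnNge hhi.
have [s0 [h1 h2 h3]] := exist_block h s (ltn_ord s) his hi hs.
have := hnone s0; rewrite h1 clt // cle ltr_nat ler_nat h2 h3.
done.
Qed.

Definition vs (h : nat) := vstar gw g i h.+1.

Lemma Wlt_i : Wlt i = N%:R * gw i.
Proof.
by rewrite -hN /Lgrp divfK // gt_eqF // gw_pos.
Qed.

Lemma Vbase : Wlt i.+1 <= \sum_(0 <= h < Cnat i) vs h.
Proof.
rewrite (Wlt_step i (ltn_ord i)).
have -> : Ordinal (ltn_ord i) = i by apply: val_inj.
apply: le_trans (_ : \sum_(0 <= h < Cnat i) gw i <= _).
  rewrite sumr_const_nat subn0 Cnat_i -mulr_natl natrD mulrDl Wlt_i /Wgrp.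
  done.
apply: ler_sum_nat => h /andP[_ hh]; apply: Lb => //.
Qed.

Lemma Vlow s : (i <= s)%N -> (s < k)%N -> Wlt s.+1 <= \sum_(0 <= h < Cnat s) vs h.
Proof.
elim: s => [|s IH] his hsk.
  have e : nat_of_ord i = 0%N by lia.
  by have := Vbase; rewrite e.
case: (leqP i s) => his'; last first.
  have e : nat_of_ord i = s.+1 by lia.
  by have := Vbase; rewrite e.
rewrite (Wlt_step s.+1 hsk) (Cnat_step s hsk his').
rewrite (@big_cat_nat _ _ _ (Cnat s)) //=; last by lia.
apply: lerD; first by apply: IH => //; lia.
apply: le_trans (_ : \sum_(Cnat s <= h < Cnat s + group_size g (Ordinal hsk)) gw (Ordinal hsk) <= _).
  by rewrite sumr_const_nat addKn /Wgrp mulr_natl.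
apply: ler_sum_nat => h /andP[h1 h2]; apply: Lb => /=; first by lia.
by rewrite (Cnat_step s hsk his'); lia.
Qed.

Lemma Vt s t : (i <= s)%N -> (s < k)%N -> (Cnat s <= t)%N ->
  Wlt s.+1 <= \sum_(0 <= h < t) vs h.
Proof.
move=> his hsk hst; apply: le_trans (Vlow s his hsk) _.
rewrite [X in _ <= X](@big_cat_nat _ _ _ (Cnat s)) //= lerDl.
by apply: sumr_ge0 => h _; apply: vstar_ge0.
Qed.

Definition dd := dindex (v a) (gw i).

Lemma dd_le_m : (dd <= m)%N.
Proof. by apply/bigmax_leqP => j _; exact: ltn_ord. Qed.

Lemma dd_lt j : (j < dd)%N -> gw i < vn j.
Proof.
move=> hj; have hjm : (j < m)%N by have := dd_le_m; lia.
rewrite (_ : vn j = v a (Ordinal hjm)); last by rewrite -vn_ord.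
rewrite ltNge; apply/negP => hle.
have : (dd <= j)%N.
  apply/bigmax_leqP => j' hj'; rewrite ltnNge; apply/negP => hjj'.
  have hs := ci_v_sorted H a (e := Ordinal hjm) (f := j') hjj'.
  by have := lt_le_trans hj' (le_trans hs hle); rewrite ltxx.
lia.
Qed.

Lemma dd_ge j : (dd <= j)%N -> vn j <= gw i.
Proof.
move=> hj; case: (ltnP j m) => hjm; last first.
  by rewrite /vn insubF ?ltW ?gw_pos //= ltnNge hjm.
rewrite (_ : vn j = v a (Ordinal hjm)); last by rewrite -vn_ord.
rewrite leNgt; apply/negP => h.
have h2 : ((Ordinal hjm).+1 <= dd)%N := @leq_bigmax_cond _ (fun j => gw i < v a j) (fun j : 'I_m => j.+1) _ h.
simpl in h2; lia.
Qed.

Lemma pre t : (dd <= t)%N ->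
  \sum_(0 <= j < t) vn j <= \sum_(0 <= j < t) vs j ->
  \sum_(dd <= j < t) vn j <= \sum_(dd <= j < t) vs j.
Proof.
move=> hdt; rewrite !(@big_cat_nat _ _ _ dd 0 t) //= => h.
have : \sum_(0 <= j < dd) vs j <= \sum_(0 <= j < dd) vn j.
  apply: ler_sum_nat => j /andP[_ hj].
  apply: ltW; exact: (le_lt_trans (vstar_le j.+1) (dd_lt j hj)).
move: h; set x1 := \sum_(0 <= j < dd) vn j; set x2 := \sum_(0 <= j < dd) vs j.
set y1 := \sum_(dd <= j < t) vn j; set y2 := \sum_(dd <= j < t) vs j.
lra.
Qed.

Lemma main_ind t : (dd <= t <= m)%N ->
  \sum_(dd <= j < t) vn j <= \sum_(dd <= j < t) vs j.
Proof.
have hk : (0 < k)%N by have := ltn_ord i; lia.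
elim/ltn_ind: t => t IH /andP[hdt htm].
case: (leqP t (Cnat i)) => hti.
  apply: ler_sum_nat => j /andP[hdj hjt].
  apply: le_trans (dd_ge j hdj) _; apply: Lb => //; lia.
case: (leqP t (Cnat k.-1)) => htk; last first.
  apply: pre => //.
  apply: le_trans (capacity k t (leqnn k) htm _) _.
    by move=> j _ b hb; have := ltn_ord (g b); lia.
  have hik := ltn_ord i.
  have hV := Vt k.-1 t (ltac:(lia)) (ltac:(lia)) (ltac:(lia)).
  by rewrite prednK in hV.
have hik := ltn_ord i.
have [s0 [h1 h2 h3]] := exist_block t k.-1 (ltac:(lia)) (ltac:(lia)) hti htk.
have hex : exists j, (t <= j)%N || (vn j <= gw s0) by exists t; rewrite leqnn.
case: (ex_minnP hex) => p hp hmin.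
have hpt : (p <= t)%N by apply: hmin; rewrite leqnn.
have hjp : forall j, (j < p)%N -> gw s0 < vn j.
  move=> j hj; rewrite ltNge; apply/negP => hle.
  have := hmin j; rewrite hle orbT => /(_ isT); lia.
case: (ltnP p t) => hpt'.
  have hvp : vn p <= gw s0 by move: hp; rewrite leqNgt hpt'.
  have hdp : (dd <= p)%N.
    rewrite leqNgt; apply/negP => hpd.
    have := lt_le_trans (dd_lt p hpd) hvp.
    have := ci_gw_decr H h1.
    by move=> x y; have := lt_trans x y; rewrite ltxx.
  rewrite (@big_cat_nat _ _ _ p) //= [X in _ <= X](@big_cat_nat _ _ _ p) //=.
  apply: lerD; first by apply: IH => //; lia.
  apply: ler_sum_nat => j /andP[hpj hjt].
  apply: le_trans (vn_mono p j hpj) _; apply: le_trans hvp _.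
  apply: Lb; lia.
apply: pre => //.
have hs0 : (0 < s0)%N by lia.
have hs0k := ltn_ord s0.
apply: le_trans (capacity s0 t (ltnW (ltn_ord s0)) htm _) _.
  move=> j hj b hb; apply: le_lt_trans (hjp j (leq_trans hj hpt')).
  by apply: gw_le.
have hV := Vt s0.-1 t (ltac:(lia)) (ltac:(lia)) (ltac:(lia)).
by rewrite prednK in hV.
Qed.
End Main.

Theorem mainTheorem9 (R : realFieldType) (n m k : nat)
    (gw : 'I_k -> R) (g : 'I_n -> 'I_k) (v : 'I_n -> 'I_m -> R) :
  canonical_instance gw g v ->
  forall (i : 'I_k) (a : 'I_n), g a = i ->
  forall t : nat, (dindex (v a) (gw i) < t <= m)%N ->
    \sum_(j : 'I_m | (dindex (v a) (gw i) <= j < t)%N) v a j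
    <= \sum_(j : 'I_m | (dindex (v a) (gw i) <= j < t)%N) vstar gw g i j.+1.
Proof.
move=> H i a _ t /andP[hdt htm].
have [A hA] := @alloc_exists R n m k gw g v H a.
have [N hN] := @Lgrp_nat R n m k gw g v H i.
have := @main_ind R n m k gw g v H a A hA i N hN t (ltac:(rewrite /dd; lia)).
rewrite /dd /vs => hmain.
rewrite (eq_bigr (fun j : 'I_m => vn R n m v a j)); last by move=> j _; rewrite vn_ord.
rewrite (@sum_ord_nat R m _ t (vn R n m v a) htm).
have e := @sum_ord_nat R m (dindex (v a) (gw i)) t (fun j => vstar gw g i j.+1) htm.
simpl in e. rewrite e. exact: hmain.
Qed.
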